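(* Let $L$ be a real-valued Lévy process with characteristic triplet $(b,0,F)$ whose symbol $A$ satisfies the Gårding condition with index $Y\in(0,2)$, i.e. there exist constants $C_2>0$, $C_3\ge0$ and $0\le Y'<Y$ with $\Re(A(u))\ge C_2|u|^Y-C_3(1+u^2)^{Y'/2}$ for all $u\in\mathds R$. Then $\int_{-1}^1|x|^\alpha F(dx)=\infty$ for all $\alpha<Y$. In particular, the Blumenthal–Getoor index $\beta$ of $L$ satisfies $\beta\ge Y$.
   Context: The symbol of $L$ (w.r.t. a truncation function $h$) is $A(u)=iub-\int(e^{-iuy}-1+iuh(y))F(dy)$, so $\Re(A(u))=\int(1-\cos(uy))F(dy)$. The Blumenthal–Getoor index is $\beta:=\inf\{\alpha>0:\int_{[-1,1]}|x|^\alpha F(dx)<\infty\}$. *)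

(* Defs.v *)
From HB Require Import structures.
From mathcomp Require Import all_boot all_order all_algebra.
From mathcomp Require Import all_classical all_reals all_analysis.
Set Implicit Arguments. Unset Strict Implicit. Unset Printing Implicit Defensive.
Import Order.TTheory GRing.Theory Num.Theory.
Local Open Scope classical_set_scope.
Local Open Scope ring_scope.

Definition levy_measure (R : realType) (F : {measure set R -> \bar R}) : Prop :=
  F [set 0] = 0%E /\
  (\int[F]_x (Num.min 1 (x ^+ 2))%:E < +oo)%E.

(* Real part of the Lévy symbol A(u) of a triplet (b,0,F):
   Re A(u) = \int (1 - cos(u y)) F(dy)  (independent of b and of h). *)
Definition symbol_re (R : realType) (F : {measure set R -> \bar R}) (u : R) : \bar R :=
  (\int[F]_y (1 - cos (u * y))%:E)%E.

Definition garding (R : realType) (F : {measure set R -> \bar R}) (Y : R) : Prop :=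
  exists (C2 C3 Y' : R), 0 < C2 /\ 0 <= C3 /\ 0 <= Y' /\ Y' < Y /\
    forall u : R,
      ((C2 * `|u| `^ Y - C3 * (1 + u ^+ 2) `^ (Y' / 2))%:E <= symbol_re F u)%E.

Definition BG_index (R : realType) (F : {measure set R -> \bar R}) : \bar R :=
  ereal_inf [set a%:E | a in [set a : R | 0 < a /\
     (\int[F]_(x in `[(-1)%R, 1%R]%classic) (`|x| `^ a)%:E < +oo)%E]].

(* Main.v *)
Require Import Defs.
From HB Require Import structures.
From mathcomp Require Import all_boot all_order all_algebra.
From mathcomp Require Import all_classical all_reals all_analysis.
From mathcomp Require Import ring lra.
From mathcomp Require Import measurable_realfun.
Import Order.TTheory GRing.Theory Num.Theory.
Local Open Scope classical_set_scope.
Local Open Scope ring_scope.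

Lemma sin_le_pos (R : realType) (x : R) : 0 < x -> `|sin x| <= x.
Proof.
move=> x0.
have [c _ Hc] : exists2 c, c \in `]0, x[ & sin x - sin 0 = cos c * (x - 0).
  apply: (@MVT R sin cos 0 x x0).
  apply: derivable_within_continuous => y _; exact: derivable_sin.
rewrite sin0 subr0 subr0 in Hc.
by rewrite Hc normrM (gtr0_norm x0); apply: ler_piMl; [exact: ltW|exact: cos_max].
Qed.

Lemma sin_le_abs (R : realType) (x : R) : `|sin x| <= `|x|.
Proof.
have [x0|x0|->] := ltgtP x 0; last by rewrite sin0 normr0.
  by rewrite -normrN -sinN (ltr0_norm x0) sin_le_pos// oppr_gt0.
by rewrite (gtr0_norm x0) sin_le_pos.
Qed.

Lemma one_cos_le (R : realType) (t : R) : 1 - cos t <= t ^+ 2 / 2.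
Proof.
have -> : t = (t / 2) *+ 2 by rewrite -mulr_natr divfK.
rewrite cos_mulr2n cos2sin2.
have h := @sin_le_abs R (t / 2).
have h2 : sin (t/2) ^+ 2 <= (t/2) ^+ 2.
  rewrite -(real_normK (num_real (sin _))) -(real_normK (num_real (t/2))).
  by rewrite lerXn2r// nnegrE.
rewrite !mulr2n.
have e : (t / 2 + t/2) ^+ 2 / 2 = 2 * (t/2)^+2 by field.
rewrite e. lra.
Qed.

Lemma cos_bound (R : realType) (a t : R) : 0 <= a <= 2 -> 1 - cos t <= 2 * `|t| `^ a.
Proof.
move=> /andP[a0 a2].
have [t1|t1] := lerP `|t| 1.
  have [->|tn0] := eqVneq t 0; first by rewrite cos0 subrr mulr_ge0// powR_ge0.
  have tp : 0 < `|t| by rewrite normr_gt0.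
  have h1 := @one_cos_le R t.
  have h2 : `|t| `^ 2%:R <= `|t| `^ a by apply: ger_powR; rewrite ?tp.
  rewrite powR_mulrn// (real_normK (num_real t)) in h2.
  have := powR_ge0 `|t| a. have := normr_ge0 t. nra.
have h1 : 1 <= `|t| `^ a by rewrite -(powRr0 `|t|); apply: ler_powR => //; exact: ltW.
have := cos_geN1 t. lra.
Qed.

Lemma real_contra (R : realType) (C2 D Y a : R) :
  0 < C2 -> 0 <= D -> 0 < a -> a < Y ->
  (forall u : R, 1 <= u -> C2 * u `^ Y <= D * u `^ a) -> False.
Proof.
move=> C20 D0 a0 aY H.
set b := D / C2 + 1.
have b1 : 1 <= b by rewrite /b lerDr divr_ge0// ltW.
set u := b `^ (1 / (Y - a)).
have Ya : 0 < Y - a by rewrite subr_gt0.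
have u1 : 1 <= u.
  have := @ler_powR R b b1 0 (1 / (Y - a)); rewrite powRr0; apply.
  by rewrite divr_ge0// ltW.
have un0 : u != 0 by rewrite gt_eqF// (lt_le_trans ltr01 u1).
have uYa : u `^ (Y - a) = b.
  rewrite /u -powRrM mul1r mulVf ?gt_eqF//; apply: powRr1; exact: (le_trans ler01 b1).
have e : u `^ Y = u `^ (Y - a) * u `^ a.
  by rewrite -powRD ?un0 ?implybT// subrK.
have := H u u1; rewrite e uYa /b.
have ua : 0 < u `^ a by rewrite powR_gt0// (lt_le_trans ltr01 u1).
move=> h.
have : C2 * (D / C2 + 1) = D + C2 by rewrite mulrDr mulrCA mulfV ?gt_eqF// mulr1 mulr1.
move=> e2. rewrite mulrA e2 in h. nra.
Qed.

Lemma growth_bound (R : realType) (C2 C3 Y' a K L Y : R) :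
  0 <= C3 -> 0 <= Y' -> Y' <= a -> Y' < 2 -> 0 <= K -> 0 <= L ->
  (forall u : R, C2 * `|u| `^ Y - C3 * (1 + u ^+ 2) `^ (Y' / 2) <= 2 * `|u| `^ a * K + 2 * L) ->
  forall u : R, 1 <= u -> C2 * u `^ Y <= (2 * K + 4 * C3 + 2 * L) * u `^ a.
Proof.
move=> C30 Y'0 Y'a Y'2 K0 L0 H u u1.
have u0 : 0 < u by exact: (lt_le_trans ltr01 u1).
have := H u; rewrite (gtr0_norm u0) => h.
have ua1 : 1 <= u `^ a.
  have := @ler_powR R u u1 0 a; rewrite powRr0; apply; exact: (le_trans Y'0).
have p1 : (1 + u ^+ 2) `^ (Y' / 2) <= (4 * u ^+ 2) `^ (Y' / 2).
  apply: ge0_ler_powR; rewrite ?nnegrE; [by rewrite divr_ge0|by rewrite addr_ge0// sqr_ge0| |].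
    by rewrite mulr_ge0// sqr_ge0.
  nra.
have p2 : (4 * u ^+ 2) `^ (Y' / 2) = 4 `^ (Y' / 2) * u `^ Y'.
  rewrite powRM ?sqr_ge0//; congr (_ * _).
  by rewrite -powR_mulrn ?(ltW u0)// -powRrM mulrC divfK.
have p3 : 4 `^ (Y' / 2) <= 4.
  have := @ler_powR R 4 (ler1n _ _) (Y' / 2) 1; rewrite powRr1// => -> //.
  by rewrite ler_pdivrMr// mul1r ltW.
have p4 : u `^ Y' <= u `^ a by exact: ler_powR.
have q1 := powR_ge0 u Y'.
have q2 := powR_ge0 4 (Y' / 2).
have : C3 * (1 + u ^+ 2) `^ (Y' / 2) <= 4 * C3 * u `^ a.
  rewrite -mulrA mulrCA; apply: ler_wpM2l => //.
  apply: (le_trans p1); rewrite p2; nra.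
nra.
Qed.

Theorem mainTheorem10 (R : realType) (b : R) (F : {measure set R -> \bar R})
  (Y : R) :
  levy_measure F -> 0 < Y < 2 -> garding F Y ->
  (forall alpha : R, alpha < Y ->
     (\int[F]_(x in `[(-1)%R, 1%R]%classic) (`|x| `^ alpha)%:E = +oo)%E) /\
  (Y%:E <= BG_index F)%E.
Proof.
Local Open Scope ereal_scope.
move=> [F0 Lfin] /andP[Y0 Y2] [C2 [C3 [Y' [C20 [C30 [Y'0 [Y'Y HG]]]]]]].
set I := `[(-1)%R, 1%R]%classic.
have mI : measurable I by exact: measurable_itv.
have inI x : (x \in I) = (`|x| <= 1)%R.
  by rewrite /I mem_setE in_itv /= ler_norml.
have part1 : forall alpha : R, (alpha < Y)%R ->
    \int[F]_(x in I) (`|x| `^ alpha)%R%:E = +oo.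
  move=> alpha aY.
  apply/eqP; apply: contraT => hfin.
  pose a := Num.max alpha ((Y' + Y) / 2)%R.
  have aY2 : ((Y' + Y) / 2 < Y)%R by lra.
  have a0 : (0 < a)%R by rewrite lt_max; apply/orP; right; lra.
  have aYa : (a < Y)%R by rewrite gt_max aY.
  have Y'a : (Y' <= a)%R by rewrite le_max; apply/orP; right; lra.
  have a2 : (a <= 2)%R by rewrite ltW// (lt_trans aYa).
  have mpow : forall c : R, measurable_fun I (EFin \o (fun x : R => `|x| `^ c)%R).
    move=> c; apply: measurableT_comp; first exact: EFin_measurable.
    have -> : (fun x : R => (`|x| `^ c)%R) = ((@powR R)^~ c) \o (fun x : R => `|x|%R) by [].
    apply: measurableT_comp; first exact: measurable_powR.
    exact: normr_measurable.
  have Kle : \int[F]_(x in I) (`|x| `^ a)%R%:E <= \int[F]_(x in I) (`|x| `^ alpha)%R%:E.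
    apply: ge0_le_integral => //; try exact: mpow.
    move=> x xI.
    have x1 : (`|x| <= 1)%R by rewrite -inI; exact/mem_set.
    rewrite lee_fin.
    have [->|xn0] := eqVneq x 0%R.
      by rewrite normr0 powR0 ?gt_eqF// powR_ge0.
    apply: ger_powR; first by rewrite normr_gt0 xn0 x1.
    by rewrite le_max lexx.
  have K0 : 0 <= \int[F]_(x in I) (`|x| `^ a)%R%:E by apply: integral_ge0 => x _; rewrite lee_fin powR_ge0.
  have Kfin : \int[F]_(x in I) (`|x| `^ a)%R%:E \is a fin_num.
    rewrite ge0_fin_numE// (le_lt_trans Kle)// ltey; exact: hfin.
  set K := fine (\int[F]_(x in I) (`|x| `^ a)%R%:E).
  have L0 : 0 <= \int[F]_x (Num.min 1 (x ^+ 2))%:E.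
    by apply: integral_ge0 => x _; rewrite lee_fin le_min ler01 sqr_ge0.
  have Lfin' : \int[F]_x (Num.min 1 (x ^+ 2))%:E \is a fin_num by rewrite ge0_fin_numE.
  set L := fine (\int[F]_x (Num.min 1 (x ^+ 2))%:E).
  have bound : forall u : R, (C2 * `|u| `^ Y - C3 * (1 + u ^+ 2) `^ (Y' / 2) <= 2 * `|u| `^ a * K + 2 * L)%R.
    move=> u; rewrite -lee_fin; apply: (le_trans (HG u)); rewrite /symbol_re.
    pose h1 := (fun x : R => (`|x| `^ a)%R%:E) \_ I.
    pose m := fun y : R => (Num.min 1 (y ^+ 2))%R%:E.
    pose c := (2 * `|u| `^ a)%R.
    have c0 : (0 <= c)%R by rewrite mulr_ge0// powR_ge0.
    have mh1 : measurable_fun setT h1 by apply/(measurable_restrictT _ _).1 => //; exact: mpow.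
    have h10 : forall y, 0 <= h1 y.
      by move=> y; rewrite /h1 /patch; case: ifP => _ //; rewrite lee_fin powR_ge0.
    have mm : measurable_fun setT m.
      apply: measurableT_comp; first exact: EFin_measurable.
      apply: measurable_minr; first exact: measurable_cst.
      exact: exprn_measurable.
    have m0 : forall y, 0 <= m y by move=> y; rewrite lee_fin le_min ler01 sqr_ge0.
    have mcos : measurable_fun setT (fun y : R => (1 - cos (u * y))%R%:E).
      apply: measurableT_comp; first exact: EFin_measurable.
      apply: measurable_funB; first exact: measurable_cst.
      apply: measurableT_comp.
        by apply: continuous_measurable_fun; exact: continuous_cos.
      apply: measurable_funM; first exact: measurable_cst.
      exact: measurable_id.
    have mch1 : measurable_fun setT (fun y => c%:E * h1 y).
      by apply: emeasurable_funM => //; exact: measurable_cst.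
    have m2m : measurable_fun setT (fun y => 2%:E * m y).
      by apply: emeasurable_funM => //; exact: measurable_cst.
    apply: (@le_trans _ _ (\int[F]_y (c%:E * h1 y + 2%:E * m y))).
      apply: ge0_le_integral; [exact: measurableT| by move=> y _; rewrite lee_fin subr_ge0 cos_le1 | exact: mcos | exact: (emeasurable_funD mch1 m2m) | ].
      move=> y _; rewrite /h1 /patch /m; case: ifP => yI.
        have y1 : (`|y| <= 1)%R by rewrite -inI.
        rewrite -!EFinM -EFinD lee_fin.
        have := @cos_bound R a (u * y); rewrite ltW ?a0 ?a2 // => /(_ isT).
        rewrite normrM powRM // /c.
        have := powR_ge0 `|y| a; have := powR_ge0 `|u| a.
        have : (0 <= Num.min 1 (y ^+ 2))%R by rewrite le_min ler01 sqr_ge0.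
        nra.
      have y1 : (1 < `|y|)%R by rewrite ltNge -inI yI.
      have y2 : (1 <= y ^+ 2)%R.
        rewrite -(real_normK (num_real y)); have := normr_ge0 y; nra.
      rewrite mule0 add0e -EFinM lee_fin min_l //.
      have := cos_geN1 (u * y); lra.
    rewrite ge0_integralD //; last first.
    - by move=> y _; rewrite mule_ge0.
    - by move=> y _; rewrite mule_ge0.
    rewrite ge0_integralZl_EFin // ge0_integralZl_EFin //.
    rewrite /h1 -integral_mkcond /m.
    have eK : \int[F]_(x in I) (`|x| `^ a)%R%:E = K%:E by rewrite /K fineK.
    have eL : \int[F]_x (Num.min 1 (x ^+ 2))%R%:E = L%:E by rewrite /L fineK.
    by rewrite eK eL -!EFinM -EFinD /c.
  have K0' : (0 <= K)%R by exact: fine_ge0.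
  have L0' : (0 <= L)%R by exact: fine_ge0.
  have D0 : (0 <= 2 * K + 4 * C3 + 2 * L)%R by rewrite !addr_ge0 ?mulr_ge0.
  exfalso; apply: (@real_contra R C2 (2 * K + 4 * C3 + 2 * L)%R Y a C20 D0 a0 aYa).
  have Y'2 : (Y' < 2)%R by lra.
  exact: (@growth_bound R C2 C3 Y' a K L Y C30 Y'0 Y'a Y'2 K0' L0' bound).
split => //.
apply: le_ereal_inf_tmp => _ [r [r0 rfin] <-].
rewrite lee_fin leNgt; apply/negP => rY.
by move: rfin; rewrite /I in part1; rewrite part1.
Qed.
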